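(* For every $n$-qubit pure state $\ket\psi$, the support of $p_\psi$ is contained in $\mathrm{Weyl}(\ket\psi)^\perp$.
   Context: For $x=(a,b)\in\mathbb F_2^{2n}$, $W_x = i^{a\cdot b}X^{a_1}Z^{b_1}\otimes\cdots\otimes X^{a_n}Z^{b_n}$ ($a\cdot b$ over the integers); $p_\psi(x)=2^{-n}\braket{\psi|W_x|\psi}^2$; $\mathrm{Weyl}(\ket\psi)=\{x:W_x\ket\psi=\pm\ket\psi\}$ (a subspace). The symplectic product is $[x,y]=\sum_{j=1}^n(x_jy_{n+j}+x_{n+j}y_j)\bmod 2$, and $T^\perp=\{a:[x,a]=0\ \forall x\in T\}$. *)

(* Defs.v *)
From HB Require Import structures.
From mathcomp Require Import all_boot all_order all_algebra.
From mathcomp Require Import mxtens.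
Set Implicit Arguments.
Unset Strict Implicit.
Unset Printing Implicit Defensive.
Import Order.TTheory GRing.Theory Num.Theory.
Local Open Scope ring_scope.

(* Scalars: an arbitrary numClosedFieldType C (e.g. the complex numbers),
   with imaginary unit 'i and conjugation ^*. *)

(* Elements x = (a,b) of F_2^{2n}: a row vector of length n + n;
   a_j = x (lshift j), b_j = x (rshift j). *)
Definition F2vec (n : nat) := 'rV['F_2]_(n + n).

Definition xa n (x : F2vec n) (j : 'I_n) : 'F_2 := x 0 (lshift n j).
Definition xb n (x : F2vec n) (j : 'I_n) : 'F_2 := x 0 (rshift n j).

Definition bitn (c : 'F_2) : nat := nat_of_ord c.

Definition PauliX (C : numClosedFieldType) : 'M[C]_2 :=
  \matrix_(i, j) (i != j)%:R.
Definition PauliZ (C : numClosedFieldType) : 'M[C]_2 :=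
  \matrix_(i, j) (if i == j then (if i == 0 :> 'I_2 then 1 else -1) else 0).

Fixpoint kronn (C : numClosedFieldType) (n : nat) : ('I_n -> 'M[C]_2) -> 'M[C]_(2 ^ n) :=
  match n with
  | 0 => fun _ => 1%:M
  | k.+1 => fun P =>
      castmx (esym (expnS 2 k), esym (expnS 2 k))
        (tensmx (P ord0) (kronn (fun j => P (lift ord0 j))))
  end.

(* W_x = i^{a.b} X^{a_1}Z^{b_1} (x) ... (x) X^{a_n}Z^{b_n}, a.b over the integers *)
Definition Weylop (C : numClosedFieldType) n (x : F2vec n) : 'M[C]_(2 ^ n) :=
  ('i ^+ (\sum_(j < n) bitn (xa x j) * bitn (xb x j))%N) *:
    kronn (fun j => PauliX C ^+ bitn (xa x j) *m PauliZ C ^+ bitn (xb x j)).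

Definition bra (C : numClosedFieldType) m (v : 'cV[C]_m) : 'rV[C]_m :=
  (map_mx Num.conj v)^T.

Definition pure_state (C : numClosedFieldType) n (psi : 'cV[C]_(2 ^ n)) : Prop :=
  (bra psi *m psi) 0 0 = 1.

Definition expval (C : numClosedFieldType) n (psi : 'cV[C]_(2 ^ n)) (x : F2vec n) : C :=
  (bra psi *m Weylop C x *m psi) 0 0.

Definition p_psi (C : numClosedFieldType) n (psi : 'cV[C]_(2 ^ n)) (x : F2vec n) : C :=
  (2 ^+ n)^-1 * (expval psi x) ^+ 2.

Definition supp_p (C : numClosedFieldType) n (psi : 'cV[C]_(2 ^ n)) : {set F2vec n} :=
  [set x | p_psi psi x != 0].

Definition Weyl (C : numClosedFieldType) n (psi : 'cV[C]_(2 ^ n)) : {set F2vec n} :=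
  [set x | (Weylop C x *m psi == psi) || (Weylop C x *m psi == - psi)].

Definition symp n (x y : F2vec n) : 'F_2 :=
  \sum_(j < n) (xa x j * xb y j + xb x j * xa y j).

Definition sperp n (T : {set F2vec n}) : {set F2vec n} :=
  [set a | [forall x in T, symp x a == 0]].

(* Main.v *)
Require Import Defs.
From HB Require Import structures.
From mathcomp Require Import all_boot all_order all_algebra mxtens.
Import Order.TTheory GRing.Theory Num.Theory.
Local Open Scope ring_scope.
Section S.
Variable C : numClosedFieldType.
Local Notation X := (PauliX C).
Local Notation Z := (PauliZ C).
Definition adj {m n} (M : 'M[C]_(m, n)) : 'M[C]_(n, m) := (map_mx Num.conj M)^T.

Lemma F2c (a : 'F_2) : a = 0 \/ a = 1.
Proof. case: a => [[|[|k]] Hk]. left; exact: val_inj. right; exact: val_inj. done. Qed.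

Ltac mx2 := apply/matrixP; let i := fresh "i" in let j := fresh "j" in move=> i j;
  case: i => [[|[|?]] ?] //; case: j => [[|[|?]] ?] //;
  rewrite ?(mxE, big_ord_recr, big_ord0) /=.

Ltac fin0 := rewrite ?mul0r ?mulr0 ?mul1r ?mulr1 ?add0r ?addr0 ?mulrNN ?opprK ?oppr0 ?mulN1r ?mulrN1 //.
Ltac fin := fin0; fin0.

Lemma XX : X *m X = 1.
Proof. mx2; fin. Qed.
Lemma ZZ : Z *m Z = 1.
Proof. mx2; fin; fin. Qed.
Lemma ZX : Z *m X = - (X *m Z).
Proof. mx2; fin. Qed.
Lemma adjX : adj X = X.
Proof. mx2; by rewrite ?rmorph0 ?rmorph1 ?rmorphN1. Qed.
Lemma adjZ : adj Z = Z.
Proof. mx2; by rewrite ?rmorph0 ?rmorph1 ?rmorphN1. Qed.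

Definition Ml (a b : 'F_2) : 'M[C]_2 := X ^+ bitn a *m Z ^+ bitn b.

Lemma adj_mul m n p (A : 'M[C]_(m, n)) (B : 'M[C]_(n, p)) : adj (A *m B) = adj B *m adj A.
Proof. by rewrite /adj map_mxM trmx_mul. Qed.

Lemma adj1 m : adj (1%:M : 'M[C]_m) = 1%:M.
Proof. by rewrite /adj map_mx1 trmx1. Qed.

Lemma ZXc (a b : 'F_2) :
  Z ^+ bitn b * X ^+ bitn a = (-1) ^+ (bitn b * bitn a)%N *: (X ^+ bitn a * Z ^+ bitn b).
Proof.
case: (F2c a) => ->; case: (F2c b) => ->; rewrite /bitn /= ?expr0 ?expr1 ?scale1r ?mul1r ?mulr1 //.
by rewrite -mulmxE ZX scaleN1r.
Qed.

Lemma Mgen (a b a' b' : 'F_2) :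
  X ^+ bitn a * Z ^+ bitn b * (X ^+ bitn a' * Z ^+ bitn b') =
  (-1) ^+ (bitn b * bitn a')%N *: (X ^+ (bitn a + bitn a') * Z ^+ (bitn b + bitn b')).
Proof.
rewrite mulrA -(mulrA (X ^+ bitn a)) ZXc -scalerAr -scalerAl mulrA.
by rewrite -(exprD X) -mulrA -(exprD Z).
Qed.

Lemma sign_double k : (-1) ^+ (k.*2) = 1 :> C.
Proof. by rewrite -signr_odd odd_double. Qed.

Lemma Mcomm (a b a' b' : 'F_2) :
  Ml a b *m Ml a' b' = (-1) ^+ (bitn a * bitn b' + bitn b * bitn a')%N *: (Ml a' b' *m Ml a b).
Proof.
rewrite /Ml !mulmxE !Mgen scalerA addnC [(bitn b + _)%N]addnC.
congr (_ *: _).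
rewrite -exprD (mulnC (bitn b') (bitn a)) addnAC exprD addnn sign_double.
by rewrite mul1r.
Qed.

Lemma adjM (a b : 'F_2) : adj (Ml a b) = (-1) ^+ (bitn a * bitn b)%N *: Ml a b.
Proof.
rewrite /Ml.
case: (F2c a) => ->; case: (F2c b) => ->;
  rewrite /bitn /= ?expr0 ?expr1 ?scale1r ?mul1mx ?mulmx1 ?adjX ?adjZ ?adj1 //.
by rewrite adj_mul adjX adjZ ZX scaleN1r.
Qed.

Lemma castmx_mulmx m m' (e : m = m') (A B : 'M[C]_m) :
  castmx (e, e) A *m castmx (e, e) B = castmx (e, e) (A *m B).
Proof. by case: m' / e. Qed.

Lemma castmx_scale m m' (e : m = m') (c : C) (A : 'M[C]_m) :
  castmx (e, e) (c *: A) = c *: castmx (e, e) A.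
Proof. by case: m' / e. Qed.

Lemma adj_cast m m' (e : m = m') (A : 'M[C]_m) :
  adj (castmx (e, e) A) = castmx (e, e) (adj A).
Proof. by case: m' / e. Qed.

Lemma tensZ m n p q (a b : C) (A : 'M[C]_(m, n)) (B : 'M[C]_(p, q)) :
  tensmx (a *: A) (b *: B) = (a * b) *: tensmx A B.
Proof. by apply/matrixP => i j; rewrite !mxE mulrACA. Qed.

Lemma adj_tens m n p q (A : 'M[C]_(m, n)) (B : 'M[C]_(p, q)) :
  adj (tensmx A B) = tensmx (adj A) (adj B).
Proof. by rewrite /adj map_mxT trmx_tens. Qed.

Lemma kronn_ext n (P Q : 'I_n -> 'M[C]_2) : (forall j, P j = Q j) -> kronn P = kronn Q.
Proof.
elim: n P Q => [|n IH] P Q H //=.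
by rewrite H (IH (fun j => P (lift ord0 j)) (fun j => Q (lift ord0 j))).
Qed.

Lemma kronn_mul n (P Q : 'I_n -> 'M[C]_2) :
  kronn P *m kronn Q = kronn (fun j => P j *m Q j).
Proof.
elim: n P Q => [|n IH] P Q /=; first by rewrite mul1mx.
by rewrite castmx_mulmx tensmx_mul IH.
Qed.

Lemma kronn_scale n (c : 'I_n -> C) (P : 'I_n -> 'M[C]_2) :
  kronn (fun j => c j *: P j) = (\prod_j c j) *: kronn P.
Proof.
elim: n c P => [|n IH] c P /=; first by rewrite big_ord0 scale1r.
by rewrite (IH (fun j => c (lift ord0 j))) tensZ castmx_scale big_ord_recl.
Qed.

Lemma kronn_adj n (P : 'I_n -> 'M[C]_2) :
  adj (kronn P) = kronn (fun j => adj (P j)).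
Proof.
elim: n P => [|n IH] P /=; first by rewrite /adj map_mx1 trmx1.
by rewrite adj_cast adj_tens IH.
Qed.

Definition sg (c : 'F_2) : C := (-1) ^+ bitn c.

Lemma sgD a b : sg (a + b) = sg a * sg b.
Proof.
by case: (F2c a) => ->; case: (F2c b) => ->; rewrite /sg /bitn /= ?expr0 ?expr1 ?mul1r ?mulr1 ?mulrNN ?mulr1.
Qed.

Lemma sgM a b : sg (a * b) = (-1) ^+ (bitn a * bitn b)%N.
Proof. by case: (F2c a) => ->; case: (F2c b) => ->. Qed.

Lemma sg0 : sg 0 = 1.
Proof. by []. Qed.

Lemma sg_sum n (F : 'I_n -> 'F_2) : sg (\sum_j F j) = \prod_j sg (F j).
Proof. exact: (big_morph sg sgD sg0). Qed.

Lemma Wcomm n (x y : F2vec n) :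
  Weylop C x *m Weylop C y = sg (symp x y) *: (Weylop C y *m Weylop C x).
Proof.
rewrite /Weylop -!scalemxAl -!scalemxAr !scalerA kronn_mul.
rewrite (@kronn_ext _ _ (fun j => (-1) ^+ (bitn (xa x j) * bitn (xb y j) + bitn (xb x j) * bitn (xa y j))%N
   *: (Ml (xa y j) (xb y j) *m Ml (xa x j) (xb x j)))); last by move=> j; exact: Mcomm.
rewrite kronn_scale -kronn_mul scalerA; congr (_ *: _).
rewrite /symp sg_sum mulrC -mulrA; congr (_ * _); last exact: mulrC.
apply: eq_bigr => j _; by rewrite sgD !sgM exprD.
Qed.

Lemma adj_scale m p (c : C) (A : 'M[C]_(m, p)) : adj (c *: A) = c^* *: adj A.
Proof. by apply/matrixP => i j; rewrite !mxE rmorphM. Qed.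

Lemma Wherm n (x : F2vec n) : adj (Weylop C x) = Weylop C x.
Proof.
rewrite /Weylop adj_scale kronn_adj (kronn_ext _ _ _ (fun j => adjM _ _)) kronn_scale prodrXr scalerA.
congr (_ *: _).
by rewrite rmorphXn /= conjCi exprNn mulrAC -exprD addnn sign_double mul1r.
Qed.

Lemma bra_mul m p (A : 'M[C]_(m, p)) (v : 'cV[C]_p) : bra (A *m v) = bra v *m adj A.
Proof. by rewrite /bra /adj map_mxM trmx_mul. Qed.

Lemma bra_scale m (c : C) (v : 'cV[C]_m) : bra (c *: v) = c^* *: bra v.
Proof. by apply/matrixP => i j; rewrite !mxE rmorphM. Qed.
End S.


Theorem lemma4p3 (C : numClosedFieldType) (n : nat) (psi : 'cV[C]_(2 ^ n)) :
  pure_state psi -> supp_p psi \subset sperp (Weyl psi).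
Proof.
move=> _; apply/subsetP => x; rewrite !inE => hp; apply/forall_inP => y; rewrite inE => hy.
case: (F2c (symp y x)) => [->//|h1].
exfalso; move/negP: hp; apply.
have [s [Hs [Hsc Hs0]]] : exists s : C, Weylop C y *m psi = s *: psi /\ s^* = s /\ s != 0.
  case/orP: hy => /eqP H.
  - by exists 1; rewrite scale1r rmorph1 oner_neq0.
  - by exists (-1); rewrite scaleN1r rmorphN1 oppr_eq0 oner_neq0.
have hbra : bra psi *m Weylop C y = s *: bra psi.
  by rewrite -(@Wherm C n y) -bra_mul Hs bra_scale Hsc.
have hc := @Wcomm C n y x; rewrite h1 /sg /bitn /= ?expr1 ?scaleN1r in hc.
have E1 : bra psi *m (Weylop C y *m Weylop C x) *m psi = s *: (bra psi *m Weylop C x *m psi).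
  by rewrite mulmxA hbra -!scalemxAl.
have E2 : bra psi *m (Weylop C y *m Weylop C x) *m psi = - (s *: (bra psi *m Weylop C x *m psi)).
  by rewrite hc mulmxN mulNmx -!mulmxA Hs !scalemxAr.
have E0 : expval psi x = 0.
  have /eqP := etrans (esym E1) E2.
  rewrite -addr_eq0 -scalerDl scaler_eq0 -mulr2n mulrn_eq0 /= (negbTE Hs0) /=.
  by rewrite /expval => /eqP ->; rewrite mxE.
by rewrite /p_psi E0 expr0n mulr0.
Qed.
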